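(* Let $Y\sim N(\theta,\sigma^2)$ with $\sigma>0$, let $\tau\ge1$, and let $\theta_0=E_0[(Y^2-\sigma^2)\mathbb 1(Y^2\le\sigma^2\tau)]$, where $E_0$ denotes expectation under $\theta=0$. Then $$\big|E[(Y^2-\sigma^2)\mathbb 1(Y^2\le\sigma^2\tau)]-\theta_0\big|\le\min\{\theta^2,3\sigma^2\tau\}.$$ *)

(* Defs.v *)
From Stdlib Require Import Reals.
Open Scope R_scope.

Definition normal_pdf (theta sigma y : R) : R :=
  / (sigma * sqrt (2 * PI)) * exp (- (y - theta) ^ 2 / (2 * sigma ^ 2)).

(* Integrand of E_theta[(Y^2 - sigma^2) 1(Y^2 <= sigma^2 tau)]; the indicator
   is realised by integrating over [-sigma*sqrt tau, sigma*sqrt tau]. *)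
Definition trunc_integrand (theta sigma : R) (y : R) : R :=
  (y ^ 2 - sigma ^ 2) * normal_pdf theta sigma y.

(* Main.v *)
Require Import Defs.
From Stdlib Require Import Reals Lra Psatz.

From HB Require Import structures.
From mathcomp Require all_boot all_order all_algebra.
From mathcomp Require all_classical all_reals all_analysis.
From mathcomp Require Rstruct Rstruct_topology measurable_realfun normal_distribution.

Module MC.
From HB Require Import structures.
From mathcomp Require Import all_boot all_order all_algebra.
From mathcomp Require Import all_classical all_reals all_analysis.
From mathcomp Require Import Rstruct Rstruct_topology measurable_realfun normal_distribution.
Import Order.TTheory GRing.Theory Num.Theory.
Import numFieldNormedType.Exports.
Local Open Scope classical_set_scope.
Local Open Scope ring_scope.
Lemma Rderiv_mc (F : R -> R) x l : derivable_pt_lim F x l ->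
  is_derive (x:R^o) 1 (F : R^o -> R^o) l.
Proof.
move=> Fd.
suff H : (fun h => h^-1 *: (((F : R^o -> R^o) \o shift x) (h *: (1:R^o)) - F x)) @ (0:R^o)^' --> (l:R^o).
  by apply: DeriveDef; [apply/cvg_ex; exists l|apply: cvg_lim].
apply/cvgrPdist_lt => e /RltP e0.
have [d Hd] := Fd e e0.
idtac.
apply/nbhs_ballP; exists (pos d); first by apply/RltP; exact: cond_pos.
move=> h /= hb hn0.
have hn : h <> 0%coqR by apply/eqP.
have := Hd h hn.
rewrite /ball /= sub0r normrN in hb.
rewrite RabsE. move/(_ (RltP hb)).
rewrite RabsE => /RltP; rewrite distrC.
congr (`|_ - _| < _).
rewrite /= /shift /= RdivE mulrC; congr (_ * (F _ - _)); rewrite addrC; congr (_ + _); exact: (esym (mulr1 h)).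
Qed.

Lemma Rcont_mc (F : R -> R) x l : derivable_pt_lim F x l ->
  {for x, continuous F}.
Proof.
move=> Fd; apply/continuity_pt_cvg.
apply: derivable_continuous_pt; exists l; exact: Fd.
Qed.

Lemma bridge (m s a : R) (F : R -> R) : 0 < s -> 0 < a ->
  (forall y, -a <= y <= a -> derivable_pt_lim F y (normal_pdf m s y)) ->
  F a - F (-a) <= 1.
Proof.
move=> s0 a0 Fd.
have aa : -a < a by rewrite gtrN.
have := @continuous_FTC2 R (normal_pdf m s) F (-a) a aa.
have H1 : {within `[-a, a], continuous (normal_pdf m s)}.
  by apply: continuous_subspaceT; apply: continuous_normal_pdf; rewrite gt_eqF.
have H2 : derivable_oo_LRcontinuous (F : R -> R^o) (-a) a.
  split.
  - move=> x; rewrite in_itv /= => /andP[h1 h2].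
    have := Fd x; rewrite (ltW h1) (ltW h2) => /(_ isT) /Rderiv_mc.
    by case.
  - apply: cvg_at_right_filter.
    apply: (@Rcont_mc F (-a) (normal_pdf m s (-a))); apply: Fd.
    by rewrite lexx /= ltW.
  - apply: cvg_at_left_filter.
    apply: (@Rcont_mc F a (normal_pdf m s a)); apply: Fd.
    by rewrite lexx andbT ltW.
have H3 : {in `]-a, a[, (F : R -> R^o)^`()%classic =1 normal_pdf m s}.
  move=> x; rewrite in_itv /= => /andP[h1 h2].
  have := Fd x; rewrite (ltW h1) (ltW h2) => /(_ isT) /Rderiv_mc.
  by move=> D; rewrite derive1E derive_val.
move=> /(_ H1 H2 H3) E.
have : (\int[lebesgue_measure]_(x in `[(- a)%R, a]) (normal_pdf m s x)%:E <=
        \int[lebesgue_measure]_x (normal_pdf m s x)%:E)%E.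
  apply: ge0_subset_integral => //.
  - apply/measurable_EFinP; exact: measurable_normal_pdf.
  - by move=> x _; rewrite lee_fin normal_pdf_ge0.
rewrite E integral_normal_pdf -EFinB lee_fin //.
Qed.

Lemma pi_eq : pi = PI.
Proof.
pose f := fun x : R => (1 + x ^+ 2)^-1.
have l01 : (0:R) < 1 by [].
have cf : {within `[0%R, 1%R], continuous f}.
  apply: continuous_subspaceT => x.
  apply: cvgV; first by rewrite gt_eqF // ltr_pwDl // sqr_ge0.
  apply: cvgD; first exact: cvg_cst.
  exact: exprn_continuous.
have E1 := @continuous_FTC2 R f Ratan.atan 0 1 l01 cf.
have E2 := @continuous_FTC2 R f atan 0 1 l01 cf.
have Hs : forall x, derivable_pt_lim Ratan.atan x (f x).
  move=> x; have := derivable_pt_lim_atan x.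
  by rewrite /f RinvE RpowE.
have := E1 _ _; have := E2 _ _.
move=> {E1 E2} E2 E1.
have e : (Ratan.atan 1 - Ratan.atan 0 = atan 1 - atan 0).
  apply: EFin_inj; rewrite !EFinB -E1 ?E2 //.
  - split.
    + by move=> x _; exact: derivable_atan.
    + by apply: cvg_at_right_filter; exact: continuous_atan.
    + by apply: cvg_at_left_filter; exact: continuous_atan.
  - by move=> x _; rewrite derive1_atan.
  - split.
    + by move=> x _; have [] := @Rderiv_mc _ _ _ (Hs x).
    + by apply: cvg_at_right_filter; exact: (@Rcont_mc _ _ _ (Hs 0)).
    + by apply: cvg_at_left_filter; exact: (@Rcont_mc _ _ _ (Hs 1)).
  - by move=> x _; have D := @Rderiv_mc _ _ _ (Hs x); rewrite derive1E derive_val.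
move: e; rewrite atan_1 atan_0 atan1 atan0 !subr0 RdivE.
have -> : (4%coqR : R) = 4%:R by rewrite IZRposE INRE.
move=> e.
have : pi / 4%:R * 4%:R = PI / 4%:R * 4%:R by rewrite e.
by rewrite !mulfVK.
Qed.

Lemma pdf_eq (m s y : R) : 0 < s -> Defs.normal_pdf m s y = normal_pdf m s y.
Proof.
move=> s0; rewrite /normal_pdf gt_eqF // /Defs.normal_pdf.
rewrite /normal_peak /normal_fun pi_eq -RexpE.
have h2 : (2%coqR : R) = 2%:R by rewrite IZRposE INRE.
rewrite !RealsE /=.
congr (_^-1 * expR _).
  by rewrite mulr_natl -mulrnAr [RHS]sqrtrM ?sqr_ge0 // sqrtr_sqr ger0_norm ?ltW.
by rewrite mulr_natl.
Qed.

Lemma P_le1 (m s a : R) (F : R -> R) : (0 < s)%coqR -> (0 < a)%coqR ->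
  (forall y, (-a <= y <= a)%coqR -> derivable_pt_lim F y (Defs.normal_pdf m s y)) ->
  (F a - F (-a) <= 1)%coqR.
Proof.
move=> /RltP s0 /RltP a0 Fd; apply/RleP.
have := @bridge m s a F s0 a0; apply.
move=> y /andP[/RleP h1 /RleP h2].
have := Fd y (conj h1 h2).
by rewrite pdf_eq.
Qed.
End MC.

From Coquelicot Require Import Coquelicot.
Open Scope R_scope.

Lemma mono_from_deriv (h h' : R -> R) z : 0 < z ->
  (forall c, 0 <= c <= z -> derivable_pt_lim h c (h' c)) ->
  (forall c, 0 <= c <= z -> 0 <= h' c) -> h 0 <= h z.
Proof.
intros Hz Hd Hp. destruct (MVT_cor2 h h' 0 z Hz Hd) as [c [E Hc]].
assert (0 <= h' c) by (apply Hp; lra). nra.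
Qed.

Lemma exp_t2 z : 0 <= z -> 1 + z + z^2/2 <= exp z.
Proof.
intros Hz. destruct (Req_dec z 0) as [->|Hn].
{ rewrite exp_0; lra. }
set (h := fun z => exp z - (1 + z + z^2/2)).
assert (h 0 <= h z).
{ apply mono_from_deriv with (h' := fun z => exp z - 1 - z). lra.
  intros c _. apply is_derive_Reals. unfold h. auto_derive; auto. field.
  intros c _. pose proof (exp_ineq1_le c). lra. }
unfold h in H. rewrite exp_0 in H. lra.
Qed.

Lemma exp_t3 z : 0 <= z -> 1 + z + z^2/2 + z^3/6 <= exp z.
Proof.
intros Hz. destruct (Req_dec z 0) as [->|Hn].
{ rewrite exp_0; lra. }
set (h := fun z => exp z - (1 + z + z^2/2 + z^3/6)).
assert (h 0 <= h z).
{ apply mono_from_deriv with (h' := fun z => exp z - (1 + z + z^2/2)). lra.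
  intros c _. apply is_derive_Reals. unfold h. auto_derive; auto. field.
  intros c Hc. pose proof (exp_t2 c (proj1 Hc)). lra. }
unfold h in H. rewrite exp_0 in H. lra.
Qed.

Lemma gexp y : exp (- y^2/2) = / exp (y^2/2).
Proof. rewrite <- exp_Ropp. f_equal. field. Qed.

Lemma yg_le y : 0 <= y -> y * exp (-y^2/2) <= 7/10.
Proof.
intros Hy. rewrite gexp.
assert (HE := exp_t2 (y^2/2) ltac:(nra)).
assert (0 < exp (y^2/2)) by apply exp_pos.
assert (y <= 7/10 * exp (y^2/2)).
{ pose proof (pow2_ge_0 (y^2-1)). pose proof (pow2_ge_0 (y - 20/21)). nra. }
apply (Rmult_le_reg_r (exp (y^2/2))); auto.
rewrite Rmult_assoc, Rinv_l by lra. lra.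
Qed.

Lemma y3g_le y : (1 + y^2) * y * exp (-y^2/2) <= 17/10.
Proof.
rewrite gexp.
assert (HE := exp_t3 (y^2/2) ltac:(nra)).
assert (0 < exp (y^2/2)) by apply exp_pos.
assert ((1+y^2)*y <= 17/10 * exp (y^2/2)).
{ pose proof (pow2_ge_0 (1 - 5/17*y - 3/85*y^2 - 5/68*y^3)).
  pose proof (pow2_ge_0 (y - 1335/2798*y^2 - 829/13990*y^3)).
  pose proof (pow2_ge_0 (y^2 - 77445/131618*y^3)).
  pose proof (pow2_ge_0 (y^3)). nra. }
apply (Rmult_le_reg_r (exp (y^2/2))); auto.
rewrite Rmult_assoc, Rinv_l by lra. lra.
Qed.

Lemma g_deriv c : derivable_pt_lim (fun y => exp (-y^2/2)) c (- c * exp (-c^2/2)).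
Proof.
apply is_derive_Reals. auto_derive; auto.
replace (- (c * (c * 1)) * / 2) with (-c^2/2) by field. field.
Qed.

Lemma g_mvt d e : 0 <= d < e -> exists xi, d < xi /\
  exp (-d^2/2) - exp (-e^2/2) = xi * exp (-xi^2/2) * (e - d).
Proof.
intros H. destruct (MVT_cor2 (fun y => exp (-y^2/2)) (fun c => - c * exp (-c^2/2)) d e
  ltac:(lra) (fun c _ => g_deriv c)) as [xi [E Hx]].
exists xi. split. lra. lra.
Qed.

Lemma exp_mono u v : u <= v -> exp u <= exp v.
Proof. intros [H|H]. left; apply exp_increasing; auto. subst; lra. Qed.

Lemma key x t : 0 <= x -> 0 <= t ->
  (1 + x^2 - t^2) * (exp (-(x-t)^2/2) - exp (-(x+t)^2/2)) <= 2 * (24/10) * t.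
Proof.
intros Hx Ht.
set (p := exp (-(x-t)^2/2)). set (q := exp (-(x+t)^2/2)).
assert (Hq : 0 < q) by apply exp_pos.
assert (Hpq : q <= p).
{ apply exp_mono. nra. }
destruct (Rle_dec (1 + x^2 - t^2) 0) as [Hneg|Hpos].
{ nra. }
destruct (Rle_dec x t) as [Hxt|Htx].
- destruct (Req_dec x 0) as [Hx0|Hx0].
  { subst x. unfold p, q. replace (0 - t) with (-(0+t)) by ring.
    replace ((-(0+t))^2) with ((0+t)^2) by ring. nra. }
  destruct (g_mvt (t - x) (x + t) ltac:(lra)) as [xi [Hxi E]].
  assert (Hp : p = exp (-(t-x)^2/2)).
  { unfold p. f_equal. field. }
  fold q in E. rewrite <- Hp in E.
  pose proof (yg_le xi ltac:(lra)).
  assert (0 <= xi * exp (-xi^2/2)).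
  { apply Rmult_le_pos. lra. left; apply exp_pos. }
  set (A := xi * exp (-xi^2/2)) in *.
  rewrite E. replace (x + t - (t - x)) with (2*x) by ring.
  assert (HB : 0 <= A * (2*x)) by nra.
  assert (HC : (1 + x^2 - t^2) * (A * (2*x)) <= 1 * (A * (2*x))).
  { apply Rmult_le_compat_r; nra. }
  nra.
- destruct (Req_dec t 0) as [Ht0|Ht0].
  { subst t. unfold p, q. replace (x - 0) with (x + 0) by ring. nra. }
  destruct (g_mvt (x - t) (x + t) ltac:(lra)) as [xi [Hxi E]].
  fold p q in E.
  pose proof (y3g_le xi).
  pose proof (yg_le (x - t) ltac:(lra)). fold p in H0.
  assert (0 <= xi * exp (-xi^2/2)).
  { apply Rmult_le_pos. lra. left; apply exp_pos. }
  set (A := xi * exp (-xi^2/2)) in *.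
  assert (HA : (1 + (x-t)^2) * A <= 17/10).
  { unfold A. apply Rle_trans with ((1 + xi^2) * xi * exp (-xi^2/2)); auto.
    rewrite Rmult_assoc. apply Rmult_le_compat_r. auto. nra. }
  assert (HL : 1 + x^2 - t^2 = (1 + (x-t)^2) + 2*t*(x-t)) by ring.
  rewrite HL, E.
  replace (x + t - (x - t)) with (2*t) by ring.
  assert (0 <= x - t) by lra.
  assert ((x - t) * p <= 7/10) by lra.
  assert (2*t*(x-t)*(A*(2*t)) <= 2*t*(x-t)*p).
  { apply Rmult_le_compat_l. nra. assert (E2 : A*(2*t) = p - q) by (rewrite E; ring). lra. }
  assert (HH1 : (1+(x-t)^2)*A*(2*t) <= 17/10*(2*t)) by (apply Rmult_le_compat_r; lra).
  assert (HH2 : 2*t*((x-t)*p) <= 2*t*(7/10)) by (apply Rmult_le_compat_l; lra).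
  nra.
Qed.

Lemma sqrt2pi_ge : 24/10 <= sqrt (2*PI).
Proof.
assert (H := PI2_3_2).
replace (24/10) with (sqrt ((24/10)^2)) by (rewrite sqrt_pow2; lra).
apply sqrt_le_1_alt. lra.
Qed.

Lemma keyU s a t : 0 < s -> 0 <= a -> 0 <= t ->
  / (s * sqrt (2*PI)) * (s^2 + a^2 - t^2) *
  (exp (-(a-t)^2/(2*s^2)) - exp (-(-a-t)^2/(2*s^2))) <= 2*t.
Proof.
intros Hs Ha Ht.
set (x := a/s). set (u := t/s).
assert (Hx : 0 <= x) by (unfold x; apply Rdiv_le_0_compat; lra).
assert (Hu : 0 <= u) by (unfold u; apply Rdiv_le_0_compat; lra).
pose proof (key x u Hx Hu) as K.
replace (-(a-t)^2/(2*s^2)) with (-(x-u)^2/2) by (unfold x, u; field; lra).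
replace (-(-a-t)^2/(2*s^2)) with (-(x+u)^2/2) by (unfold x, u; field; lra).
replace (s^2 + a^2 - t^2) with (s^2*(1 + x^2 - u^2)) by (unfold x, u; field; lra).
set (D := exp (-(x-u)^2/2) - exp (-(x+u)^2/2)) in *.
set (r := sqrt (2*PI)).
assert (Hr : 24/10 <= r) by apply sqrt2pi_ge.
assert (Ht' : t = s * u) by (unfold u; field; lra).
replace (/ (s * r) * (s ^ 2 * (1 + x ^ 2 - u ^ 2)) * D) with
  (s * ((1 + x ^ 2 - u ^ 2) * D) / r) by (field; lra).
apply Rle_div_l. lra.
rewrite Ht'.
assert (s * ((1 + x ^ 2 - u ^ 2) * D) <= s * (2 * (24/10) * u)).
{ apply Rmult_le_compat_l; lra. }
nra.
Qed.

Definition g0 (s x : R) : R := / (s * sqrt (2*PI)) * exp (- x^2 / (2*s^2)).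

Lemma c0_pos s : 0 < s -> 0 < / (s * sqrt (2*PI)).
Proof.
intros. apply Rinv_0_lt_compat. apply Rmult_lt_0_compat; auto.
apply sqrt_lt_R0. pose proof PI_RGT_0. lra.
Qed.

Lemma g0_pos s x : 0 < s -> 0 < g0 s x.
Proof. intros. unfold g0. apply Rmult_lt_0_compat. apply c0_pos; auto. apply exp_pos. Qed.

Lemma g0_is_derive s x : 0 < s -> is_derive (g0 s) x (- x / s^2 * g0 s x).
Proof.
intros Hs. unfold g0. auto_derive; auto.
replace (- (x * (x * 1)) * / (2 * (s * (s * 1)))) with (- x^2 / (2*s^2)) by (field; lra).
field. split; [|lra]. pose proof (c0_pos s Hs). apply Rgt_not_eq.
apply sqrt_lt_R0. pose proof PI_RGT_0. lra.
Qed.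

Lemma Derive_g0 s x : 0 < s -> Derive (fun y => g0 s y) x = - x / s^2 * g0 s x.
Proof. intros. apply is_derive_unique. apply g0_is_derive; auto. Qed.

Lemma g0_cont s x : 0 < s -> continuity_pt (g0 s) x.
Proof.
intros. apply derivable_continuous_pt. exists (- x / s^2 * g0 s x).
apply is_derive_Reals. apply g0_is_derive; auto.
Qed.

Lemma FTC_R (g K : R -> R) a b : a <= b ->
  (forall x, a <= x <= b -> continuity_pt g x) ->
  (forall x, a <= x <= b -> derivable_pt_lim K x (g x)) ->
  forall pr : Riemann_integrable g a b, RiemannInt pr = K b - K a.
Proof.
intros hab C D pr.
rewrite (RiemannInt_P20 hab (FTC_P1 hab C) pr).
assert (H1 := RiemannInt_P29 hab C).
assert (H2 : antiderivative g K a b).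
{ split; auto. intros x Hx. exists (exist _ (g x) (D x Hx)). reflexivity. }
destruct (antiderivative_Ucte g _ _ a b H1 H2) as [c Hc].
rewrite (Hc b), (Hc a) by lra. ring.
Qed.

Lemma exists_Phi s L : 0 < s -> 0 <= L ->
  exists Phi : R -> R, forall x, -L <= x <= L -> derivable_pt_lim Phi x (g0 s x).
Proof.
intros Hs HL. assert (h : -L <= L) by lra.
assert (C : forall x, -L <= x <= L -> continuity_pt (g0 s) x) by (intros; apply g0_cont; auto).
exists (primitive h (FTC_P1 h C)). intros x Hx. apply RiemannInt_P28; auto.
Qed.

Lemma pdf_g0 t s y : normal_pdf t s y = g0 s (y - t).
Proof. reflexivity. Qed.

Lemma g0_even s x : g0 s (- x) = g0 s x.
Proof. unfold g0. do 3 f_equal. ring. Qed.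

Lemma g0_mono s x y : 0 < s -> x^2 <= y^2 -> g0 s y <= g0 s x.
Proof.
intros Hs H. unfold g0. apply Rmult_le_compat_l. left; apply c0_pos; auto.
apply exp_mono. unfold Rdiv. apply Rmult_le_compat_r.
left. apply Rinv_0_lt_compat. nra. lra.
Qed.


Definition Fc (Phi : R -> R) s a t :=
  t^2 * (Phi (a - t) - Phi (-a - t)) - s^2*(a+t)*g0 s (a - t) + s^2*(-a+t)*g0 s (-a - t).

Lemma Derive_Phi (Phi : R -> R) s L y :
  (forall x, -L <= x <= L -> derivable_pt_lim Phi x (g0 s x)) ->
  -L <= y <= L -> Derive (fun x => Phi x) y = g0 s y.
Proof. intros HP Hy. apply is_derive_unique. apply is_derive_Reals. apply HP; auto. Qed.

Lemma exd_Phi (Phi : R -> R) s L y :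
  (forall x, -L <= x <= L -> derivable_pt_lim Phi x (g0 s x)) ->
  -L <= y <= L -> ex_derive (fun x => Phi x) y.
Proof. intros HP Hy. exists (g0 s y). apply is_derive_Reals. apply HP; auto. Qed.

Lemma exd_g0 s y : 0 < s -> ex_derive (fun x => g0 s x) y.
Proof. intros. eexists. apply g0_is_derive; auto. Qed.

Lemma int_id (Phi : R -> R) s a L t :
  0 < s -> 0 < a -> Rabs t + a <= L ->
  (forall x, -L <= x <= L -> derivable_pt_lim Phi x (g0 s x)) ->
  forall pr : Riemann_integrable (trunc_integrand t s) (-a) a,
  RiemannInt pr = Fc Phi s a t.
Proof.
intros Hs Ha HL HP pr.
pose proof (Rle_abs t). pose proof (Rabs_maj2 t).
rewrite (FTC_R (trunc_integrand t s)
  (fun y => t^2 * Phi (y - t) - s^2*(y+t)*g0 s (y - t)) (-a) a ltac:(lra)).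
- unfold Fc. ring.
- intros x _. apply derivable_continuous_pt. apply ex_derive_Reals_0.
  unfold trunc_integrand, normal_pdf. auto_derive. auto.
- intros y Hy. apply is_derive_Reals. auto_derive.
  + repeat split; [apply (exd_Phi Phi s L); [exact HP|lra] | apply exd_g0; auto].
  + rewrite (Derive_Phi Phi s L) by (first [exact HP | lra]). rewrite Derive_g0 by auto.
    unfold trunc_integrand. rewrite pdf_g0. unfold Rminus. field. lra.
Qed.

Definition Hyp_Phi (Phi : R -> R) s L :=
  forall x, -L <= x <= L -> derivable_pt_lim Phi x (g0 s x).

Lemma Pf_ge0 (Phi : R -> R) s a L t :
  0 < s -> 0 < a -> Rabs t + a <= L -> Hyp_Phi Phi s L ->
  0 <= Phi (a - t) - Phi (-a - t).
Proof.
intros Hs Ha HL HP.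
pose proof (Rle_abs t). pose proof (Rabs_maj2 t).
destruct (MVT_cor2 Phi (g0 s) (-a - t) (a - t) ltac:(lra)) as [c [E Hc]].
{ intros c Hc. apply HP. lra. }
rewrite E. pose proof (g0_pos s c Hs). nra.
Qed.

Lemma Pf_le1 (Phi : R -> R) s a L t :
  (forall (m : R) (F : R -> R), 0 < s -> 0 < a ->
     (forall y, -a <= y <= a -> derivable_pt_lim F y (normal_pdf m s y)) ->
     F a - F (-a) <= 1) ->
  0 < s -> 0 < a -> Rabs t + a <= L -> Hyp_Phi Phi s L ->
  Phi (a - t) - Phi (-a - t) <= 1.
Proof.
intros HP1 Hs Ha HL HP.
pose proof (Rle_abs t). pose proof (Rabs_maj2 t).
apply (HP1 t (fun y => Phi (y - t)) Hs Ha).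
intros y Hy. apply is_derive_Reals. auto_derive.
- apply (exd_Phi Phi s L); [exact HP|lra].
- rewrite (Derive_Phi Phi s L) by (first [exact HP | lra]). rewrite pdf_g0. unfold Rminus. ring.
Qed.

Lemma Fc_derive (Phi : R -> R) s a L t :
  0 < s -> 0 < a -> Rabs t + a <= L -> Hyp_Phi Phi s L ->
  derivable_pt_lim (Fc Phi s a) t
    (2 * t * (Phi (a - t) - Phi (-a - t)) - (a^2 + s^2) * (g0 s (a - t) - g0 s (-a - t))).
Proof.
intros Hs Ha HL HP.
pose proof (Rle_abs t). pose proof (Rabs_maj2 t).
apply is_derive_Reals. unfold Fc. auto_derive.
- repeat split; try (apply (exd_Phi Phi s L); [exact HP|lra]); apply exd_g0; auto.
- rewrite !(Derive_Phi Phi s L) by (first [exact HP | lra]). rewrite !Derive_g0 by auto.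
  unfold Rminus. field. lra.
Qed.

Definition Bf s a t := - s^2*(a+t)*g0 s (a - t) + s^2*(-a+t)*g0 s (-a - t).

Lemma Bf_derive s a t : 0 < s ->
  derivable_pt_lim (Bf s a) t (- (s^2 + a^2 - t^2) * (g0 s (a - t) - g0 s (-a - t))).
Proof.
intros Hs. apply is_derive_Reals. unfold Bf. auto_derive.
- repeat split; apply exd_g0; auto.
- rewrite !Derive_g0 by auto. unfold Rminus. field. lra.
Qed.

Lemma keyB s a t : 0 < s -> 0 <= a -> 0 <= t ->
  (s^2 + a^2 - t^2) * (g0 s (a - t) - g0 s (-a - t)) <= 2 * t.
Proof.
intros Hs Ha Ht. pose proof (keyU s a t Hs Ha Ht). unfold g0.
replace ((s ^ 2 + a ^ 2 - t ^ 2) *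
  (/ (s * sqrt (2 * PI)) * exp (- (a - t) ^ 2 / (2 * s ^ 2)) -
   / (s * sqrt (2 * PI)) * exp (- (- a - t) ^ 2 / (2 * s ^ 2))))
  with (/ (s * sqrt (2*PI)) * (s^2 + a^2 - t^2) *
  (exp (-(a-t)^2/(2*s^2)) - exp (-(-a-t)^2/(2*s^2)))) by ring.
auto.
Qed.

Lemma keyB_all s a t : 0 < s -> 0 <= a ->
  t * ((s^2 + a^2 - t^2) * (g0 s (a - t) - g0 s (-a - t))) <= 2 * t * t.
Proof.
intros Hs Ha. destruct (Rle_dec 0 t) as [Ht|Ht].
- pose proof (keyB s a t Hs Ha Ht). nra.
- pose proof (keyB s a (-t) Hs Ha ltac:(lra)).
  replace (a - - t) with (-(-a - t)) in H by ring.
  replace (- a - - t) with (-(a - t)) in H by ring.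
  rewrite !g0_even in H. nra.
Qed.

Lemma lower_bound (Phi : R -> R) s a L th :
  0 < s -> 0 < a -> Rabs th + a <= L -> Hyp_Phi Phi s L ->
  - th^2 <= Fc Phi s a th - Fc Phi s a 0.
Proof.
intros Hs Ha HL HP.
pose proof (Pf_ge0 Phi s a L th Hs Ha HL HP).
assert (E : Fc Phi s a th = th^2 * (Phi (a - th) - Phi (-a - th)) + Bf s a th)
  by (unfold Fc, Bf; ring).
assert (E0 : Fc Phi s a 0 = Bf s a 0) by (unfold Fc, Bf; ring).
rewrite E, E0.
assert (0 <= th^2 * (Phi (a - th) - Phi (-a - th))) by (apply Rmult_le_pos; nra).
set (W := fun t => t^2 + Bf s a t).
set (W' := fun t => 2 * t - (s^2 + a^2 - t^2) * (g0 s (a - t) - g0 s (-a - t))).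
assert (HW : forall c, derivable_pt_lim W c (W' c)).
{ intros c. unfold W, W'.
  replace (2 * c - (s ^ 2 + a ^ 2 - c ^ 2) * (g0 s (a - c) - g0 s (- a - c))) with
   (2 * c + (- (s ^ 2 + a ^ 2 - c ^ 2) * (g0 s (a - c) - g0 s (- a - c)))) by ring.
  apply (derivable_pt_lim_plus (fun t => t^2) (Bf s a)).
  - apply is_derive_Reals. auto_derive; auto. ring.
  - apply Bf_derive; auto. }
assert (W0 : W 0 <= W th).
{ destruct (Rtotal_order 0 th) as [Hp|[Hz|Hn]].
  - destruct (MVT_cor2 W W' 0 th Hp (fun c _ => HW c)) as [c [Ec Hc]].
    assert (HWc : 0 <= W' c * th).
    { unfold W'. assert (0 < c) by lra.
      assert ((s ^ 2 + a ^ 2 - c ^ 2) * (g0 s (a - c) - g0 s (- a - c)) <= 2 * c) by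
        (apply keyB; lra). nra. }
    replace (th - 0) with th in Ec by ring. lra.
  - subst; lra.
  - destruct (MVT_cor2 W W' th 0 Hn (fun c _ => HW c)) as [c [Ec Hc]].
    pose proof (keyB_all s a c Hs ltac:(lra)).
    assert (HWc : W' c * (0 - th) <= 0).
    { unfold W'. assert (c < 0) by lra. nra. }
    lra. }
unfold W in W0. lra.
Qed.

Lemma upper_bound (Phi : R -> R) s a L th :
  (forall (m : R) (F : R -> R), 0 < s -> 0 < a ->
     (forall y, -a <= y <= a -> derivable_pt_lim F y (normal_pdf m s y)) ->
     F a - F (-a) <= 1) ->
  0 < s -> 0 < a -> Rabs th + a <= L -> Hyp_Phi Phi s L ->
  Fc Phi s a th - Fc Phi s a 0 <= th^2.
Proof.
intros HP1 Hs Ha HL HP.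
set (U := fun t => t^2 - Fc Phi s a t).
set (U' := fun t => 2 * t - (2 * t * (Phi (a - t) - Phi (-a - t)) -
     (a^2 + s^2) * (g0 s (a - t) - g0 s (-a - t)))).
assert (HU : forall c, Rabs c <= Rabs th -> derivable_pt_lim U c (U' c)).
{ intros c Hc. unfold U, U'.
  apply (derivable_pt_lim_minus (fun t => t^2) (Fc Phi s a)).
  - apply is_derive_Reals. auto_derive; auto. ring.
  - apply (Fc_derive Phi s a L); auto; lra. }
assert (Hsgn : forall c, Rabs c <= Rabs th -> c * U' c >= 0).
{ intros c Hc.
  pose proof (Pf_le1 Phi s a L c HP1 Hs Ha ltac:(lra) HP).
  unfold U'. set (P := Phi (a - c) - Phi (- a - c)) in *.
  set (D := g0 s (a - c) - g0 s (- a - c)).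
  replace (c * (2 * c - (2 * c * P - (a ^ 2 + s ^ 2) * D))) with
    (2 * (c * c) * (1 - P) + (a^2 + s^2) * (c * D)) by ring.
  assert (0 <= c * c) by nra.
  assert (0 <= c * D).
  { unfold D. destruct (Rle_dec 0 c) as [Hc0|Hc0].
    - assert (g0 s (-a - c) <= g0 s (a - c)) by (apply g0_mono; auto; nra). nra.
    - assert (g0 s (a - c) <= g0 s (-a - c)) by (apply g0_mono; auto; nra). nra. }
  assert (0 <= a^2 + s^2) by nra.
  assert (0 <= 2 * (c * c) * (1 - P)) by (apply Rmult_le_pos; lra).
  assert (0 <= (a^2 + s^2) * (c * D)) by (apply Rmult_le_pos; lra).
  lra. }
assert (U0 : U 0 <= U th).
{ destruct (Rtotal_order 0 th) as [Hp|[Hz|Hn]].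
  - destruct (MVT_cor2 U U' 0 th Hp) as [c [Ec Hc]].
    { intros c Hc. apply HU. rewrite (Rabs_right c), (Rabs_right th); lra. }
    assert (Hc' : Rabs c <= Rabs th) by (rewrite (Rabs_right c), (Rabs_right th); lra).
    pose proof (Hsgn c Hc'). assert (0 <= U' c) by nra. nra.
  - subst; lra.
  - destruct (MVT_cor2 U U' th 0 Hn) as [c [Ec Hc]].
    { intros c Hc. apply HU. rewrite (Rabs_left1 c), (Rabs_left1 th); lra. }
    assert (Hc' : Rabs c <= Rabs th) by (rewrite (Rabs_left1 c), (Rabs_left1 th); lra).
    pose proof (Hsgn c Hc'). assert (U' c <= 0) by nra. nra. }
unfold U in U0. lra.
Qed.

Lemma int_pdf (Phi : R -> R) s a L t k :
  0 < s -> 0 < a -> Rabs t + a <= L -> Hyp_Phi Phi s L ->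
  forall pr : Riemann_integrable (fun y => k * normal_pdf t s y) (-a) a,
  RiemannInt pr = k * (Phi (a - t) - Phi (-a - t)).
Proof.
intros Hs Ha HL HP pr.
pose proof (Rle_abs t). pose proof (Rabs_maj2 t).
rewrite (FTC_R _ (fun y => k * Phi (y - t)) (-a) a ltac:(lra)).
- ring.
- intros x _. apply derivable_continuous_pt. apply ex_derive_Reals_0.
  unfold normal_pdf. auto_derive. auto.
- intros y Hy. apply is_derive_Reals. auto_derive.
  + apply (exd_Phi Phi s L); [exact HP|lra].
  + rewrite (Derive_Phi Phi s L) by (first [exact HP | lra]).
    rewrite pdf_g0. unfold Rminus. ring.
Qed.

Lemma pdf_cont t s x : continuity_pt (normal_pdf t s) x.
Proof.
apply derivable_continuous_pt. apply ex_derive_Reals_0.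
unfold normal_pdf. auto_derive. auto.
Qed.

Lemma trunc_bounds (Phi : R -> R) s a L t :
  (forall (m : R) (F : R -> R), 0 < s -> 0 < a ->
     (forall y, -a <= y <= a -> derivable_pt_lim F y (normal_pdf m s y)) ->
     F a - F (-a) <= 1) ->
  0 < s -> s <= a -> Rabs t + a <= L -> Hyp_Phi Phi s L ->
  forall pr : Riemann_integrable (trunc_integrand t s) (-a) a,
  - s^2 <= RiemannInt pr <= a^2 - s^2.
Proof.
intros HP1 Hs Hsa HL HP pr.
assert (Ha : 0 < a) by lra.
pose proof (Pf_le1 Phi s a L t HP1 Hs Ha HL HP).
pose proof (Pf_ge0 Phi s a L t Hs Ha HL HP).
assert (Hc : forall k, forall x, -a <= x <= a -> continuity_pt (fun y => k * normal_pdf t s y) x).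
{ intros k x _. apply continuity_pt_mult. apply continuity_pt_const. intros u v; auto.
  apply pdf_cont. }
split.
- set (pr2 := continuity_implies_RiemannInt (f := fun y => (- s^2) * normal_pdf t s y) (a := -a) (b := a) ltac:(lra) (Hc (- s^2))).
  assert (RiemannInt pr2 <= RiemannInt pr).
  { apply RiemannInt_P19. lra. intros x Hx. unfold trunc_integrand.
    pose proof (g0_pos s (x - t) Hs). rewrite pdf_g0. nra. }
  rewrite (int_pdf Phi s a L t (- s^2) Hs Ha HL HP pr2) in H1. nra.
- set (pr2 := continuity_implies_RiemannInt (f := fun y => (a^2 - s^2) * normal_pdf t s y) (a := -a) (b := a) ltac:(lra) (Hc (a^2 - s^2))).
  assert (RiemannInt pr <= RiemannInt pr2).
  { apply RiemannInt_P19. lra. intros x Hx. unfold trunc_integrand.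
    pose proof (g0_pos s (x - t) Hs). rewrite pdf_g0.
    assert (0 <= a^2 - x^2) by nra.
    assert (0 <= (a^2 - x^2) * g0 s (x - t)) by (apply Rmult_le_pos; lra).
    nra. }
  rewrite (int_pdf Phi s a L t (a^2 - s^2) Hs Ha HL HP pr2) in H1.
  assert (0 <= a^2 - s^2) by nra. nra.
Qed.

Theorem lemma6_aux
  (HP1 : forall (m s a : R) (F : R -> R), 0 < s -> 0 < a ->
     (forall y, -a <= y <= a -> derivable_pt_lim F y (normal_pdf m s y)) ->
     F a - F (-a) <= 1)
  (theta sigma tau : R) (hsigma : 0 < sigma) (htau : 1 <= tau)
  (pr : Riemann_integrable (trunc_integrand theta sigma)
          (- (sigma * sqrt tau)) (sigma * sqrt tau))
  (pr0 : Riemann_integrable (trunc_integrand 0 sigma)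
          (- (sigma * sqrt tau)) (sigma * sqrt tau)) :
  Rabs (RiemannInt pr - RiemannInt pr0)
    <= Rmin (theta ^ 2) (3 * sigma ^ 2 * tau).
Proof.
set (a := sigma * sqrt tau) in *.
assert (Hst : 1 <= sqrt tau).
{ rewrite <- sqrt_1. apply sqrt_le_1_alt. lra. }
assert (Hsa : sigma <= a) by (unfold a; nra).
assert (Ha : 0 < a) by lra.
assert (Ha2 : a^2 = sigma^2 * tau).
{ unfold a. rewrite Rpow_mult_distr. rewrite pow2_sqrt by lra. ring. }
set (L := Rabs theta + a).
assert (HL0 : 0 <= L) by (unfold L; pose proof (Rabs_pos theta); lra).
destruct (exists_Phi sigma L hsigma HL0) as [Phi HP].
assert (HLt : Rabs theta + a <= L) by (unfold L; lra).
assert (HL0' : Rabs 0 + a <= L) by (rewrite Rabs_R0; unfold L; pose proof (Rabs_pos theta); lra).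
assert (HP1' : forall (m : R) (F : R -> R), 0 < sigma -> 0 < a ->
     (forall y, -a <= y <= a -> derivable_pt_lim F y (normal_pdf m sigma y)) ->
     F a - F (-a) <= 1) by (intros m F H1 H2 H3; exact (HP1 m sigma a F H1 H2 H3)).
rewrite (int_id Phi sigma a L theta hsigma Ha HLt HP pr).
rewrite (int_id Phi sigma a L 0 hsigma Ha HL0' HP pr0).
pose proof (upper_bound Phi sigma a L theta HP1' hsigma Ha HLt HP).
pose proof (lower_bound Phi sigma a L theta hsigma Ha HLt HP).
pose proof (trunc_bounds Phi sigma a L theta HP1' hsigma Hsa HLt HP pr).
pose proof (trunc_bounds Phi sigma a L 0 HP1' hsigma Hsa HL0' HP pr0).
rewrite (int_id Phi sigma a L theta hsigma Ha HLt HP pr) in H1.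
rewrite (int_id Phi sigma a L 0 hsigma Ha HL0' HP pr0) in H2.
apply Rmin_glb; apply Rabs_le; split.
- lra.
- lra.
- assert (0 <= sigma^2 * tau) by nra. nra.
- assert (0 <= sigma^2 * tau) by nra. nra.
Qed.


Theorem lemma6 (theta sigma tau : R) (hsigma : 0 < sigma) (htau : 1 <= tau)
  (pr : Riemann_integrable (trunc_integrand theta sigma)
          (- (sigma * sqrt tau)) (sigma * sqrt tau))
  (pr0 : Riemann_integrable (trunc_integrand 0 sigma)
          (- (sigma * sqrt tau)) (sigma * sqrt tau)) :
  Rabs (RiemannInt pr - RiemannInt pr0)
    <= Rmin (theta ^ 2) (3 * sigma ^ 2 * tau).
Proof.
apply lemma6_aux; auto.
intros m s a F Hs Ha HF. exact (MC.P_le1 m s a F Hs Ha HF).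
Qed.
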